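(* Consider $\bm{y}=\bm{A}\bm{x}+\bm{w}$ over $\mathbb{H}\in\{\mathbb{R},\mathbb{C}\}$, with $\bm A$ having i.i.d. entries $\mathcal{N}(0,1/m)$ (resp. $\mathcal{CN}(0,1/m)$), Gaussian noise of variance $\sigma_w^2=\delta\sigma_0^2$ ($\delta=m/n$, $\sigma_0^2>0$ constant), and signal entries i.i.d. Bernoulli-Gaussian, $p_x=(1-\epsilon)\Delta_{x=0}+\epsilon\,p_G(x;0,\sigma_x^2)$ (resp. $(1-\epsilon)\Delta_{|x|=0}+\epsilon\,p_{CG}(x;0,\sigma_x^2)$), $\epsilon\in(0,1]$, recovered by AMP with the MMSE (posterior mean) denoiser. Let $\delta^\dagger$ be the MSE-optimal measurement ratio as characterized in the context. Then $\delta^{\dagger}<2$. Moreover, if $$\sigma_x^2<\frac{\sigma_0^2}{\epsilon\left(1-R^\infty I(R^\infty,\epsilon)\right)}\ \text{(real case)},\qquad \sigma_x^2<\frac{\sigma_0^2}{\epsilon\left(1-R^\infty I_C(R^\infty,\epsilon)\right)}\ \text{(complex case)},$$ then $\delta^{\dagger}<1$.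
   Context: $p_G(x;0,s^2)$ is the real Gaussian density, $p_{CG}(x;0,s^2)=\frac{1}{\pi s^2}\exp(-|x|^2/s^2)$ the circular complex Gaussian density. For $\sigma_e>0$ let $R=\frac{\sigma_x^2}{\sigma_e^2+\sigma_x^2}$, $$I(R,\epsilon)=\int_{\mathbb{R}}\frac{\phi(x)\,x^2}{1+\frac{1-\epsilon}{\epsilon}\frac{1}{\sqrt{1-R}}\exp\!\left(-\frac{R}{1-R}\frac{x^2}{2}\right)}dx,\quad I_C(R,\epsilon)=\int_{\mathbb{C}}\frac{\phi_C(x)\,|x|^2}{1+\frac{1-\epsilon}{\epsilon}\frac{1}{1-R}\exp\!\left(-\frac{R}{1-R}|x|^2\right)}dx,$$ with $\phi$ the standard real normal density and $\phi_C=p_{CG}(\cdot;0,1)$. The state-evolution MSE of the MMSE denoiser at effective noise level $\sigma_e$ is $\mathrm{Err}(\sigma_e)=\epsilon\sigma_x^2(1-RI(R,\epsilon))$ (real) or $\epsilon\sigma_x^2(1-RI_C(R,\epsilon))$ (complex), and the state evolution is $(\sigma_e^{t+1})^2=\frac1\delta\mathrm{Err}(\sigma_e^t)+\delta\sigma_0^2$; assuming AMP converges, its fixed point $\sigma_e^\infty$ satisfies $(\sigma_e^\infty)^2=\frac1\delta\mathrm{Err}_\infty+\delta\sigma_0^2$ with $\mathrm{Err}_\infty=\mathrm{Err}(\sigma_e^\infty)$. The minimal achievable $\mathrm{Err}_\infty$ over $\delta$ is attained when $(\sigma_e^\infty)^4=4\sigma_0^2\mathrm{Err}_\infty$, and the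 optimal ratio is then $\delta^\dagger=\frac{(\sigma_e^\infty)^2}{2\sigma_0^2}$, with $\sigma_e^\infty$ the solution of this condition and $R^\infty=\frac{\sigma_x^2}{(\sigma_e^\infty)^2+\sigma_x^2}$. *)

(* Defs.v *)
From mathcomp Require Import all_boot all_order all_algebra.
From mathcomp Require Import all_classical all_reals all_analysis.
Set Implicit Arguments. Unset Strict Implicit. Unset Printing Implicit Defensive.
Import Order.TTheory GRing.Theory Num.Theory.
Local Open Scope ring_scope.

Section Defs.
Variable R : realType.

Definition phiG (x : R) : R := (Num.sqrt (2 * pi))^-1 * expR (- (x ^+ 2) / 2).
(* standard circular complex normal density on C ~ R x R: (1/pi) exp(-|x|^2) *)
Definition phiCG (x : R * R) : R := pi^-1 * expR (- (x.1 ^+ 2 + x.2 ^+ 2)).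

Definition I_real (Rr eps : R) : R :=
  Rintegral (@lebesgue_measure R) setT
    (fun x : R => phiG x * x ^+ 2 /
       (1 + (1 - eps) / eps * (Num.sqrt (1 - Rr))^-1
              * expR (- (Rr / (1 - Rr)) * (x ^+ 2 / 2)))).

Definition I_cplx (Rr eps : R) : R :=
  Rintegral ((@lebesgue_measure R) \x (@lebesgue_measure R))%E setT
    (fun x : R * R => phiCG x * (x.1 ^+ 2 + x.2 ^+ 2) /
       (1 + (1 - eps) / eps * (1 - Rr)^-1
              * expR (- (Rr / (1 - Rr)) * (x.1 ^+ 2 + x.2 ^+ 2)))).

Definition Ifun (cplx : bool) (Rr eps : R) : R :=
  if cplx then I_cplx Rr eps else I_real Rr eps.

(* R = sigma_x^2 / (sigma_e^2 + sigma_x^2) ; sx2 = sigma_x^2, se = sigma_e *)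
Definition Rratio (sx2 se : R) : R := sx2 / (se ^+ 2 + sx2).

(* state-evolution MSE of the MMSE denoiser at effective noise level se *)
Definition Err (cplx : bool) (eps sx2 se : R) : R :=
  eps * sx2 * (1 - Rratio sx2 se * Ifun cplx (Rratio sx2 se) eps).

End Defs.

(* Main.v *)
Require Import Defs.
From mathcomp Require Import all_boot all_order all_algebra.
From mathcomp Require Import all_classical all_reals all_analysis.
From mathcomp Require Import measurable_realfun.
From mathcomp Require Import ring lra.
Import Order.TTheory GRing.Theory Num.Theory.
Local Open Scope ring_scope.
Section S.
Variable R : realType.
Local Notation mu := (@lebesgue_measure R).

Lemma mEF d (T : measurableType d) (g : T -> R) :
  measurable_fun setT g -> measurable_fun setT (fun x => (g x)%:E).
Proof. by move=> h; apply/measurable_EFinP. Qed.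

Lemma gauss_s (s : R) : 0 < s ->
  (\int[mu]_x (expR (- (x ^+ 2) / (s ^+ 2 *+ 2)))%:E)%E = (Num.sqrt (s ^+ 2 * pi *+ 2))%:E.
Proof.
move=> s0.
have := integral_normal_pdf 0 s.
rewrite /normal_pdf gt_eqF //=.
under eq_integral do rewrite EFinM /normal_fun subr0.
have mf : measurable_fun setT (fun x : R => (expR (- (x ^+ 2) / (s ^+ 2 *+ 2)))%:E).
  apply: mEF; apply: measurableT_comp => //.
  apply: measurable_funM => //; apply: measurable_funN => //.
have E1 : (\int[mu]_x ((normal_peak s)%:E * (expR (- (x ^+ 2) / (s ^+ 2 *+ 2)))%:E) =
   (normal_peak s)%:E * \int[mu]_x (expR (- (x ^+ 2) / (s ^+ 2 *+ 2)))%:E)%E.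
  apply: ge0_integralZl_EFin => //; last exact: normal_peak_ge0.
rewrite E1.
have pk : 0 < normal_peak s by apply: normal_peak_gt0; rewrite gt_eqF.
have : (0 <= \int[mu]_x (expR (- (x ^+ 2) / (s ^+ 2 *+ 2)))%:E)%E.
  by apply: integral_ge0 => x _; rewrite lee_fin expR_ge0.
case: (\int[mu]_x _)%E => [r| |] //= _.
  move=> /eqP; rewrite eqe => /eqP h.
  congr EFin. rewrite /normal_peak in h.
  have hp : 0 < Num.sqrt (s ^+ 2 * pi *+ 2) by rewrite sqrtr_gt0 mulrn_wgt0 // mulr_gt0 ?pi_gt0 // exprn_gt0.
  have : Num.sqrt (s ^+ 2 * pi *+ 2) * ((Num.sqrt (s ^+ 2 * pi *+ 2))^-1 * r) = Num.sqrt (s ^+ 2 * pi *+ 2) * 1 by rewrite h.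
  by rewrite mulrA mulfV ?gt_eqF // mul1r mulr1.
by rewrite gt0_muley ?lte_fin.

Qed.

Lemma moment_alg (P s m : R) : 0 < P -> 0 < s ->
  (forall t, 0 < t -> s * P + ((s ^+ 2 *+ 2)^-1 - (t ^+ 2 *+ 2)^-1) * m <= t * P) ->
  m = P * s ^+ 3.
Proof.
move=> P0 s0 H.
have key : forall t, 0 < t -> (t - s) * ((t + s) * m - 2 * s ^+ 2 * t ^+ 2 * P) <= 0.
  move=> t t0; have := H t t0.
  have s2 : s ^+ 2 *+ 2 != 0 by rewrite mulrn_eq0 /= expf_eq0 /= gt_eqF.
  have t2 : t ^+ 2 *+ 2 != 0 by rewrite mulrn_eq0 /= expf_eq0 /= gt_eqF.
  have pos : 0 < 2 * s ^+ 2 * t ^+ 2 by rewrite !mulr_gt0 // exprn_gt0.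
  rewrite -subr_ge0 => h.
  have : 0 <= (2 * s ^+ 2 * t ^+ 2) * (t * P - (s * P + ((s ^+ 2 *+ 2)^-1 - (t ^+ 2 *+ 2)^-1) * m)).
    exact: mulr_ge0 (ltW pos) h.
  have -> : (2 * s ^+ 2 * t ^+ 2) * (t * P - (s * P + ((s ^+ 2 *+ 2)^-1 - (t ^+ 2 *+ 2)^-1) * m))
     = - ((t - s) * ((t + s) * m - 2 * s ^+ 2 * t ^+ 2 * P)).
    by field; rewrite !gt_eqF.
  lra.
set A := P * s ^+ 3.
have A0 : 0 < A by rewrite mulr_gt0 // exprn_gt0.
have hA : A = P * s ^+ 3 by [].
case: (ltgtP m A) => // hm.
- (* m < A : take t < s *)
  case: (lerP m 0) => m0.
  + have := key (s / 2) (divr_gt0 s0 (ltr0Sn _ _)).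
    have : 0 < 2 * s ^+ 2 * (s / 2) ^+ 2 * P by rewrite !mulr_gt0 // ?exprn_gt0 // divr_gt0.
    have : (s / 2 + s) * m <= 0 by rewrite mulr_ge0_le0 // addr_ge0 // ltW // divr_gt0.
    nra.
  + set t := s * (m + A) / (2 * A).
    have t0 : 0 < t by rewrite /t !mulr_gt0 // ?invr_gt0 ?mulr_gt0 // addr_gt0.
    have := key t t0.
    have ts : t - s = s * (m - A) / (2 * A) by rewrite /t; field; rewrite gt_eqF.
    have e : (t + s) * m - 2 * s ^+ 2 * t ^+ 2 * P = s * (m - A) / 2.
      rewrite /t hA; by field; rewrite !gt_eqF.
    rewrite ts e.
    have p1 : 0 < s * (A - m) / (2 * A) by rewrite !mulr_gt0 // ?invr_gt0 ?mulr_gt0 // subr_gt0.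
    have p2 : 0 < s * (A - m) / 2 by rewrite !mulr_gt0 // ?invr_gt0 ?mulr_gt0 ?exprn_gt0 // subr_gt0.
    have -> : s * (m - A) / (2 * A) = - (s * (A - m) / (2 * A)) by field; rewrite gt_eqF.
    have -> : s * (m - A) / 2 = - (s * (A - m) / 2) by field.
    nra.
- (* m > A : take t > s *)
  set t := s * (m + A) / (2 * A).
  have t0 : 0 < t by rewrite /t !mulr_gt0 // ?invr_gt0 ?mulr_gt0 // addr_gt0 // (lt_trans A0).
  have := key t t0.
  have ts : t - s = s * (m - A) / (2 * A) by rewrite /t; field; rewrite gt_eqF.
  have e : (t + s) * m - 2 * s ^+ 2 * t ^+ 2 * P = s * (m - A) / 2.
    rewrite /t hA; by field; rewrite !gt_eqF.
  rewrite ts e.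
  have p1 : 0 < s * (m - A) / (2 * A) by rewrite !mulr_gt0 // ?invr_gt0 ?mulr_gt0 // subr_gt0.
  have p2 : 0 < s * (m - A) / 2 by rewrite !mulr_gt0 // ?invr_gt0 ?mulr_gt0 ?exprn_gt0 // subr_gt0.
  nra.
Qed.

Definition gf (s x : R) := expR (- (x ^+ 2) / (s ^+ 2 *+ 2)).
Definition mf2 (s x : R) := x ^+ 2 * gf s x.

Lemma gf_ge0 s x : 0 <= gf s x. Proof. exact: expR_ge0. Qed.
Lemma mf2_ge0 s x : 0 <= mf2 s x. Proof. by rewrite mulr_ge0 ?sqr_ge0 ?gf_ge0. Qed.

Lemma gf_meas s : measurable_fun setT (gf s).
Proof.
apply: measurableT_comp => //; apply: measurable_funM => //; apply: measurable_funN => //.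
Qed.

Lemma mf2_meas s : measurable_fun setT (mf2 s).
Proof. by apply: measurable_funM => //; exact: gf_meas. Qed.

Lemma int_comb (f g : R -> R) (a : R) : 0 <= a ->
  (forall x, 0 <= f x) -> (forall x, 0 <= g x) ->
  measurable_fun setT f -> measurable_fun setT g ->
  (\int[mu]_x (f x + a * g x)%:E = \int[mu]_x (f x)%:E + a%:E * \int[mu]_x (g x)%:E)%E.
Proof.
move=> a0 f0 g0 mf mg.
under eq_integral do rewrite EFinD EFinM.
rewrite ge0_integralD //; first last.
- by apply: mEF; apply: measurable_funM.
- by move=> x _; rewrite lee_fin mulr_ge0.
- exact: mEF.
- by move=> x _; rewrite lee_fin.
congr (_ + _)%E.
apply: ge0_integralZl_EFin => //; last exact: mEF.
by move=> x _; rewrite lee_fin.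
Qed.

Lemma G_eq (t : R) : 0 < t -> Num.sqrt (t ^+ 2 * pi *+ 2) = t * Num.sqrt (pi *+ 2).
Proof. by move=> t0; rewrite -mulrnAr sqrtrM ?sqr_ge0 // sqrtr_sqr gtr0_norm. Qed.

Lemma kE (s t : R) : 0 < s -> 0 < t ->
  (s ^+ 2 *+ 2)^-1 - (t ^+ 2 *+ 2)^-1 = (t ^+ 2 - s ^+ 2) / (2 * s ^+ 2 * t ^+ 2).
Proof. by move=> s0 t0; field; rewrite !gt_eqF. Qed.

Lemma gf_ineq (s t x : R) : 0 < s -> 0 < t ->
  gf s x + ((s ^+ 2 *+ 2)^-1 - (t ^+ 2 *+ 2)^-1) * mf2 s x <= gf t x.
Proof.
move=> s0 t0; set k := (s ^+ 2 *+ 2)^-1 - (t ^+ 2 *+ 2)^-1.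
rewrite /mf2 /gf.
have -> : - (x ^+ 2) / (t ^+ 2 *+ 2) = - (x ^+ 2) / (s ^+ 2 *+ 2) + k * x ^+ 2.
  by rewrite /k; field; rewrite !gt_eqF.
rewrite expRD.
have -> : expR (- x ^+ 2 / (s ^+ 2 *+ 2)) + k * (x ^+ 2 * expR (- x ^+ 2 / (s ^+ 2 *+ 2)))
  = expR (- x ^+ 2 / (s ^+ 2 *+ 2)) * (1 + k * x ^+ 2) by ring.
by rewrite ler_wpM2l ?expR_ge0 // expR_ge1Dx.
Qed.

Lemma int_gf (t : R) : 0 < t -> (\int[mu]_x (gf t x)%:E = (t * Num.sqrt (pi *+ 2))%:E)%E.
Proof. by move=> t0; rewrite -G_eq // -gauss_s. Qed.

Lemma moment_s (s : R) : 0 < s ->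
  (\int[mu]_x (mf2 s x)%:E = (Num.sqrt (pi *+ 2) * s ^+ 3)%:E)%E.
Proof.
move=> s0.
set Q := Num.sqrt (pi *+ 2).
have Q0 : 0 < Q by rewrite sqrtr_gt0 mulrn_wgt0 // pi_gt0.
set M := (\int[mu]_x (mf2 s x)%:E)%E.
have M0 : (0 <= M)%E by apply: integral_ge0 => x _; rewrite lee_fin mf2_ge0.
have up : forall t, s <= t ->
   ((s * Q)%:E + ((s ^+ 2 *+ 2)^-1 - (t ^+ 2 *+ 2)^-1)%:E * M <= (t * Q)%:E)%E.
  move=> t st; have t0 : 0 < t by exact: lt_le_trans st.
  have k0 : 0 <= (s ^+ 2 *+ 2)^-1 - (t ^+ 2 *+ 2)^-1.
    rewrite kE // divr_ge0 //; first by rewrite subr_ge0; nra.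
    by apply: mulr_ge0; [apply: mulr_ge0 => //|]; exact: sqr_ge0.
  rewrite -int_gf // -int_gf // /M -int_comb //; last 4 first.
  - exact: gf_ge0.
  - exact: mf2_ge0.
  - exact: gf_meas.
  - exact: mf2_meas.
  apply: ge0_le_integral => //.
  - by move=> x _; rewrite lee_fin addr_ge0 ?gf_ge0 // mulr_ge0 ?mf2_ge0.
  - apply: mEF; apply: measurable_funD; [exact: gf_meas|].
    by apply: measurable_funM => //; exact: mf2_meas.
  - by apply: mEF; exact: gf_meas.
  - by move=> x _; rewrite lee_fin gf_ineq.
have lo : forall t, 0 < t -> t < s ->
   ((s * Q)%:E <= (t * Q)%:E + (- ((s ^+ 2 *+ 2)^-1 - (t ^+ 2 *+ 2)^-1))%:E * M)%E.
  move=> t t0 ts.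
  have k0 : 0 <= - ((s ^+ 2 *+ 2)^-1 - (t ^+ 2 *+ 2)^-1).
    rewrite kE // -mulNr divr_ge0 //; first by rewrite oppr_ge0 subr_le0; nra.
    by apply: mulr_ge0; [apply: mulr_ge0 => //|]; exact: sqr_ge0.
  rewrite -int_gf // -int_gf // /M -int_comb //; last 4 first.
  - exact: gf_ge0.
  - exact: mf2_ge0.
  - exact: gf_meas.
  - exact: mf2_meas.
  apply: ge0_le_integral => //.
  - by move=> x _; rewrite lee_fin gf_ge0.
  - by apply: mEF; exact: gf_meas.
  - apply: mEF; apply: measurable_funD; [exact: gf_meas|].
    by apply: measurable_funM => //; exact: mf2_meas.
  - move=> x _; rewrite lee_fin; have := @gf_ineq s t x s0 t0. lra.
have k2 : 0 < (s ^+ 2 *+ 2)^-1 - ((2 * s) ^+ 2 *+ 2)^-1.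
  rewrite kE ?mulr_gt0 //; first by rewrite subr_gt0; nra.
  by rewrite invr_gt0 !mulr_gt0 // exprn_gt0 // mulr_gt0.
have u2 := up (2 * s) ltac:(nra).
case hM : M => [m| |] in M0 up lo u2 *; last by [].
  congr EFin. apply: moment_alg => // t t0.
  case: (leP s t) => st.
    by have := up t st; rewrite -EFinM -EFinD lee_fin.
  have := lo t t0 st; rewrite -EFinM -EFinD lee_fin. lra.
by move: u2; rewrite gt0_muley ?lte_fin // addey.
Qed.

Lemma int_combT d (T : measurableType d) (m : {measure set T -> \bar R}) (f g : T -> R) (a : R) : 0 <= a ->
  (forall x, 0 <= f x) -> (forall x, 0 <= g x) ->
  measurable_fun setT f -> measurable_fun setT g ->
  (\int[m]_x (f x + a * g x)%:E = \int[m]_x (f x)%:E + a%:E * \int[m]_x (g x)%:E)%E.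
Proof.
move=> a0 f0 g0 mf mg.
under eq_integral do rewrite EFinD EFinM.
rewrite ge0_integralD //; first last.
- by apply: mEF; apply: measurable_funM.
- by move=> x _; rewrite lee_fin mulr_ge0.
- exact: mEF.
- by move=> x _; rewrite lee_fin.
congr (_ + _)%E.
apply: ge0_integralZl_EFin => //; last exact: mEF.
by move=> x _; rewrite lee_fin.
Qed.

Lemma inv_meas d (T : measurableType d) (K : R) (v : T -> R) : 0 <= K ->
  (forall x, 0 <= v x) -> measurable_fun setT v ->
  measurable_fun setT (fun x => (1 + K * v x)^-1).
Proof.
move=> K0 v0 mv.
pose h := fun y : R => (1 + K * `|y|)^-1.
have -> : (fun x => (1 + K * v x)^-1) = h \o v.
  by apply/funext => x; rewrite /h /= ger0_norm.
apply: measurableT_comp => //; apply: continuous_measurable_fun.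
move=> y; rewrite /h.
apply: cvgV.
  have : 0 <= K * `|y| by rewrite mulr_ge0.
  move=> hh; rewrite gt_eqF //; lra.
apply: cvgD; first exact: cvg_cst.
apply: cvgMr. exact: norm_continuous.
Qed.

Lemma gen_lb d (T : measurableType d) (m : {measure set T -> \bar R}) (u v : T -> R) (K tau : R) :
  0 <= K -> (forall x, 0 <= u x) -> (forall x, 0 <= v x) ->
  measurable_fun setT u -> measurable_fun setT v ->
  (\int[m]_x (u x)%:E = 1%:E)%E -> (\int[m]_x (u x * v x)%:E = tau%:E)%E ->
  (1 + K * tau)^-1 <= Rintegral m setT (fun x => u x / (1 + K * v x)).
Proof.
move=> K0 u0 v0 mu mv iu iuv.
have tau0 : 0 <= tau.
  rewrite -lee_fin -iuv; apply: integral_ge0 => x _; rewrite lee_fin mulr_ge0 //.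
set l := 1 + K * tau.
have l1 : 1 <= l by rewrite /l lerDl mulr_ge0.
have l0 : 0 < l by lra.
set f := fun x => u x / (1 + K * v x).
have g1 : forall x, 1 <= 1 + K * v x by move=> x; rewrite lerDl mulr_ge0.
have f0 : forall x, 0 <= f x.
  by move=> x; rewrite /f divr_ge0 // (le_trans ler01).
have mf : measurable_fun setT f by apply: measurable_funM => //; exact: inv_meas.
have muv : measurable_fun setT (fun x => u x * v x) by apply: measurable_funM.
have fu : forall x, f x <= u x.
  move=> x; rewrite /f ler_pdivrMr ?(lt_le_trans ltr01) //.
  by rewrite ler_peMr.
set F := (\int[m]_x (f x)%:E)%E.
have F0 : (0 <= F)%E by apply: integral_ge0 => x _; rewrite lee_fin.
have F1 : (F <= 1%:E)%E.
  rewrite -iu; apply: ge0_le_integral => //.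
  - by move=> x _; rewrite lee_fin.
  - exact: mEF.
  - exact: mEF.
  - by move=> x _; rewrite lee_fin.
set al := K / l ^+ 2.
have al0 : 0 <= al by rewrite divr_ge0 // sqr_ge0.
set be := 2 / l - 1 / l ^+ 2.
have be0 : 0 <= be.
  rewrite /be; have -> : 2 / l - 1 / l ^+ 2 = (2 * l - 1) / l ^+ 2 by field; rewrite gt_eqF.
  by rewrite divr_ge0 ?sqr_ge0 //; lra.
have pw : forall x, be * u x <= f x + al * (u x * v x).
  move=> x; rewrite /f /al /be.
  have gx := g1 x; set g := 1 + K * v x in gx *.
  have hv : K * v x = g - 1 by rewrite /g; ring.
  have -> : u x / g + K / l ^+ 2 * (u x * v x) = u x * (1 / g + (K * v x) / l ^+ 2) by field; rewrite !gt_eqF // (lt_le_trans ltr01).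
  rewrite hv [in leRHS]mulrC ler_wpM2r //.
  have g0 : 0 < g by lra.
  have : 0 <= (g - l) ^+ 2 / (g * l ^+ 2) by rewrite divr_ge0 ?sqr_ge0 // mulr_ge0 ?sqr_ge0 // ltW.
  have -> : (g - l) ^+ 2 / (g * l ^+ 2) = (1 / g + (g - 1) / l ^+ 2) - (2 / l - 1 / l ^+ 2).
    by field; rewrite !gt_eqF.
  lra.
have key : (be%:E <= F + al%:E * tau%:E)%E.
  have -> : be%:E = (\int[m]_x (be * u x)%:E)%E.
    under eq_integral do rewrite EFinM.
    rewrite ge0_integralZl_EFin //; last exact: mEF.
      by rewrite iu mule1.
    by move=> x _; rewrite lee_fin.
  rewrite -iuv /F -int_combT //.
  apply: ge0_le_integral => //.
  - by move=> x _; rewrite lee_fin mulr_ge0.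
  - by apply: mEF; apply: measurable_funM.
  - apply: mEF; apply: measurable_funD => //; exact: measurable_funM.
  - by move=> x _; rewrite lee_fin pw.
  - by move=> x; rewrite mulr_ge0.
case hF : F => [r| |] in F0 F1 key *.
- rewrite /Rintegral -/F hF /=.
  move: key; rewrite -EFinM -EFinD lee_fin => key.
  have : be - al * tau = l^-1.
    rewrite /be /al /l; field. by rewrite gt_eqF // -/l.
  lra.
- by [].
- by [].
Qed.

Lemma p0Q : (Num.sqrt (2 * pi))^-1 * Num.sqrt (pi *+ 2) = 1 :> R.
Proof.
rewrite mulr_natl mulVf // gt_eqF // sqrtr_gt0 mulrn_wgt0 //; exact: pi_gt0.
Qed.

Lemma int_p0mf2 (s : R) : 0 < s ->
  (\int[mu]_x ((Num.sqrt (2 * pi))^-1 * mf2 s x)%:E = (s ^+ 3)%:E)%E.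
Proof.
move=> s0; under eq_integral do rewrite EFinM.
rewrite ge0_integralZl_EFin //.
- by rewrite moment_s // -EFinM mulrA p0Q mul1r.
- by move=> x _; rewrite lee_fin mf2_ge0.
- by apply: mEF; exact: mf2_meas.
Qed.

Lemma I_real_lb (Rr eps : R) : 0 < Rr -> Rr < 1 -> 0 < eps -> eps <= 1 ->
  (1 + (1 - eps) / eps * (1 - Rr))^-1 <= I_real Rr eps.
Proof.
move=> R0 R1 e0 e1.
set sg := Num.sqrt (1 - Rr).
have sg0 : 0 < sg by rewrite sqrtr_gt0 subr_gt0.
have sg2 : sg ^+ 2 = 1 - Rr by rewrite sqr_sqrtr // subr_ge0 ltW.
set c := (1 - eps) / eps.
have c0 : 0 <= c by apply: divr_ge0; lra.
set u := fun x : R => phiG x * x ^+ 2.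
set v := fun x : R => expR (- (Rr / (1 - Rr)) * (x ^+ 2 / 2)).
have -> : (1 + c * (1 - Rr))^-1 = (1 + (c * sg^-1) * sg ^+ 3)^-1.
  by congr (_^-1); congr (_ + _); rewrite -sg2; field; rewrite gt_eqF.
have -> : I_real Rr eps = Rintegral mu setT (fun x => u x / (1 + (c * sg^-1) * v x)) by [].
apply: gen_lb.
- by rewrite mulr_ge0 // invr_ge0 ltW.
- by move=> x; rewrite /u /phiG mulr_ge0 ?sqr_ge0 // mulr_ge0 ?expR_ge0 // invr_ge0 sqrtr_ge0.
- by move=> x; rewrite /v expR_ge0.
- rewrite /u /phiG; apply: measurable_funM => //; apply: measurable_funM => //.
  apply: measurableT_comp => //; apply: measurable_funM => //; exact: measurable_funN.
- rewrite /v; apply: measurableT_comp => //; apply: measurable_funM => //.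
  exact: measurable_funM.
- have h1 := int_p0mf2 _ (@ltr01 R); rewrite expr1n in h1; rewrite -h1; apply: eq_integral => x _; congr EFin.
  rewrite /u /phiG /mf2 /gf expr1n; ring.
- rewrite -(int_p0mf2 _ sg0); apply: eq_integral => x _; congr EFin.
  rewrite /u /v /phiG /mf2 /gf.
  have -> : expR (- (x ^+ 2) / (sg ^+ 2 *+ 2)) = expR (- (x ^+ 2) / 2) * expR (- (Rr / (1 - Rr)) * (x ^+ 2 / 2)).
    rewrite -expRD sg2; congr expR; field.
    by rewrite subr_eq0 gt_eqF.
  ring.
Qed.

Local Notation mu2 := ((@lebesgue_measure R) \x (@lebesgue_measure R))%E.

Lemma int_prod (f g : R -> R) (a b : R) :
  (forall x, 0 <= f x) -> (forall x, 0 <= g x) ->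
  measurable_fun setT f -> measurable_fun setT g ->
  (\int[mu]_x (f x)%:E = a%:E)%E -> (\int[mu]_x (g x)%:E = b%:E)%E ->
  (\int[mu2]_z (f z.1 * g z.2)%:E = (a * b)%:E)%E.
Proof.
move=> f0 g0 mf mg iF iG.
rewrite fubini_tonelli1 //; last first.
  by move=> z; rewrite lee_fin mulr_ge0.
  apply: mEF; apply: measurable_funM.
    by apply: measurableT_comp => //; exact: measurable_fst.
  by apply: measurableT_comp => //; exact: measurable_snd.
rewrite /fubini_F /=.
have inner : forall x : R, (\int[mu]_y (f x * g y)%:E = (f x)%:E * b%:E)%E.
  move=> x; under eq_integral do rewrite EFinM.
  rewrite ge0_integralZl_EFin //; first by rewrite iG.
  - by move=> y _; rewrite lee_fin.
  - exact: mEF.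
under eq_integral do rewrite inner.
rewrite ge0_integralZr //; first by rewrite iF -EFinM.
- exact: mEF.
- by move=> x _; rewrite lee_fin.
- have : (0 <= \int[mu]_y (g y)%:E)%E by apply: integral_ge0 => y _; rewrite lee_fin.
  by rewrite iG lee_fin.
Qed.

Lemma int_pi_gf (s : R) : 0 < s ->
  (\int[mu]_x (pi^-1 * gf s x)%:E = (pi^-1 * (s * Num.sqrt (pi *+ 2)))%:E)%E.
Proof.
move=> s0; under eq_integral do rewrite EFinM.
rewrite ge0_integralZl_EFin //.
- by rewrite int_gf.
- by move=> x _; rewrite lee_fin gf_ge0.
- by apply: mEF; exact: gf_meas.
- by rewrite invr_ge0 pi_ge0.
Qed.

Lemma int_pi_mf2 (s : R) : 0 < s ->
  (\int[mu]_x (pi^-1 * mf2 s x)%:E = (pi^-1 * (Num.sqrt (pi *+ 2) * s ^+ 3))%:E)%E.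
Proof.
move=> s0; under eq_integral do rewrite EFinM.
rewrite ge0_integralZl_EFin //.
- by rewrite moment_s.
- by move=> x _; rewrite lee_fin mf2_ge0.
- by apply: mEF; exact: mf2_meas.
- by rewrite invr_ge0 pi_ge0.
Qed.

Lemma int_W (t : R) : 0 < t ->
  (\int[mu2]_z (pi^-1 * (z.1 ^+ 2 + z.2 ^+ 2) * expR (- (z.1 ^+ 2 + z.2 ^+ 2) / t))%:E
     = (t ^+ 2)%:E)%E.
Proof.
move=> t0.
set s := Num.sqrt (t / 2).
have s0 : 0 < s by rewrite sqrtr_gt0 divr_gt0.
have st : s ^+ 2 *+ 2 = t by rewrite sqr_sqrtr ?divr_ge0 ?ltW // -mulr_natr divfK.
have pi0 : 0 < pi :> R by exact: pi_gt0.
have pw : forall z : R * R, pi^-1 * (z.1 ^+ 2 + z.2 ^+ 2) * expR (- (z.1 ^+ 2 + z.2 ^+ 2) / t)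
   = (pi^-1 * mf2 s z.1) * gf s z.2 + 1 * ((pi^-1 * gf s z.1) * mf2 s z.2).
  move=> z; rewrite /mf2 /gf st.
  have -> : - (z.1 ^+ 2 + z.2 ^+ 2) / t = - (z.1 ^+ 2) / t + - (z.2 ^+ 2) / t by field; rewrite gt_eqF.
  rewrite expRD; ring.
under eq_integral do rewrite pw.
have g1 : forall x, 0 <= pi^-1 * gf s x by move=> x; rewrite mulr_ge0 ?invr_ge0 ?gf_ge0 // ltW.
have m1 : forall x, 0 <= pi^-1 * mf2 s x by move=> x; rewrite mulr_ge0 ?invr_ge0 ?mf2_ge0 // ltW.
have mg1 : measurable_fun setT (fun x => pi^-1 * gf s x) by apply: measurable_funM => //; exact: gf_meas.
have mm1 : measurable_fun setT (fun x => pi^-1 * mf2 s x) by apply: measurable_funM => //; exact: mf2_meas.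
have mfst : forall h : R -> R, measurable_fun setT h -> measurable_fun setT (fun z : R * R => h z.1).
  by move=> h mh; apply: measurableT_comp => //; exact: measurable_fst.
have msnd : forall h : R -> R, measurable_fun setT h -> measurable_fun setT (fun z : R * R => h z.2).
  by move=> h mh; apply: measurableT_comp => //; exact: measurable_snd.
rewrite int_combT //.
- rewrite (int_prod _ _ _ _ m1 (gf_ge0 s) mm1 (gf_meas s) (int_pi_mf2 _ s0) (int_gf _ s0)).
  rewrite (int_prod _ _ _ _ g1 (mf2_ge0 s) mg1 (mf2_meas s) (int_pi_gf _ s0) (moment_s _ s0)).
  rewrite -EFinM -EFinD; congr EFin.
  have Q2 : Num.sqrt (pi *+ 2) ^+ 2 = pi *+ 2 :> R by rewrite sqr_sqrtr // mulrn_wge0 // ltW.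
  rewrite -st.
  have -> : pi^-1 * (Num.sqrt (pi *+ 2) * s ^+ 3) * (s * Num.sqrt (pi *+ 2)) +
    1 * (pi^-1 * (s * Num.sqrt (pi *+ 2)) * (Num.sqrt (pi *+ 2) * s ^+ 3))
    = 2 * pi^-1 * Num.sqrt (pi *+ 2) ^+ 2 * s ^+ 4 by ring.
  have e2 : pi *+ 2 = 2 * pi :> R by rewrite mulr_natl.
  have e3 : s ^+ 2 *+ 2 = 2 * s ^+ 2 by rewrite mulr_natl.
  rewrite Q2 e2 e3.
  have -> : 2 * pi^-1 * (2 * pi) * s ^+ 4 = 2 * 2 * s ^+ 4 * (pi^-1 * pi) :> R by ring.
  by rewrite mulVf ?gt_eqF // mulr1; ring.
- by move=> z; rewrite mulr_ge0 ?gf_ge0.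
- by move=> z; rewrite mulr_ge0 ?mf2_ge0.
- by apply: measurable_funM; [exact: (mfst (fun x => pi^-1 * mf2 s x) mm1) | exact: (msnd (gf s) (gf_meas s))].
- by apply: measurable_funM; [exact: (mfst (fun x => pi^-1 * gf s x) mg1) | exact: (msnd (mf2 s) (mf2_meas s))].
Qed.

Lemma r2_meas : measurable_fun setT (fun z : R * R => z.1 ^+ 2 + z.2 ^+ 2).
Proof.
apply: measurable_funD.
  by apply: (measurableT_comp (f := fun x : R => x ^+ 2)) => //; exact: measurable_fst.
by apply: (measurableT_comp (f := fun x : R => x ^+ 2)) => //; exact: measurable_snd.
Qed.

Lemma I_cplx_lb (Rr eps : R) : 0 < Rr -> Rr < 1 -> 0 < eps -> eps <= 1 ->
  (1 + (1 - eps) / eps * (1 - Rr))^-1 <= I_cplx Rr eps.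
Proof.
move=> R0 R1 e0 e1.
have s0 : 0 < 1 - Rr by rewrite subr_gt0.
set c := (1 - eps) / eps.
have c0 : 0 <= c by apply: divr_ge0; lra.
set u := fun x : R * R => phiCG x * (x.1 ^+ 2 + x.2 ^+ 2).
set v := fun x : R * R => expR (- (Rr / (1 - Rr)) * (x.1 ^+ 2 + x.2 ^+ 2)).
have -> : (1 + c * (1 - Rr))^-1 = (1 + (c * (1 - Rr)^-1) * (1 - Rr) ^+ 2)^-1.
  by congr (_^-1); congr (_ + _); field; rewrite gt_eqF.
have -> : I_cplx Rr eps = Rintegral mu2 setT (fun x => u x / (1 + (c * (1 - Rr)^-1) * v x)) by [].
have pi0 : 0 < pi :> R by exact: pi_gt0.
apply: gen_lb.
- by rewrite mulr_ge0 // invr_ge0 ltW.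
- move=> x; rewrite /u /phiCG mulr_ge0 // ?addr_ge0 ?sqr_ge0 //.
  by rewrite mulr_ge0 ?expR_ge0 // invr_ge0 ltW.
- by move=> x; rewrite /v expR_ge0.
- rewrite /u /phiCG; apply: measurable_funM; last exact: r2_meas.
  apply: measurable_funM => //; apply: measurableT_comp => //.
  apply: measurable_funN; exact: r2_meas.
- rewrite /v; apply: measurableT_comp => //; apply: measurable_funM => //.
  exact: r2_meas.
- rewrite -(expr1n _ 2) -(int_W _ ltr01); apply: eq_integral => x _; congr EFin.
  by rewrite /u /phiCG divr1; ring.
- rewrite -(int_W _ s0); apply: eq_integral => x _; congr EFin.
  rewrite /u /v /phiCG.
  have -> : expR (- (x.1 ^+ 2 + x.2 ^+ 2) / (1 - Rr)) = expR (- (x.1 ^+ 2 + x.2 ^+ 2)) * expR (- (Rr / (1 - Rr)) * (x.1 ^+ 2 + x.2 ^+ 2)).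
    by rewrite -expRD; congr expR; field; rewrite gt_eqF.
  ring.
Qed.

Lemma Ifun_lb cplx (Rr eps : R) : 0 < Rr -> Rr < 1 -> 0 < eps -> eps <= 1 ->
  (1 + (1-eps)/eps * (1 - Rr))^-1 <= Ifun cplx Rr eps.
Proof. by case: cplx; [exact: I_cplx_lb | exact: I_real_lb]. Qed.

End S.

Theorem proposition3 (R : realType) (cplx : bool) (eps sx2 s02 se : R) :
  0 < eps -> eps <= 1 -> 0 < sx2 -> 0 < s02 -> 0 < se ->
  se ^+ 4 = 4 * s02 * Err cplx eps sx2 se ->
  let delta_opt := se ^+ 2 / (2 * s02) in
  delta_opt < 2 /\
  (sx2 < s02 / (eps * (1 - Rratio sx2 se * Ifun cplx (Rratio sx2 se) eps)) ->
   delta_opt < 1).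
Proof.
move=> e0 e1 x0 s0 se0 Hfix d.
rewrite /Err in Hfix.
set Rr := Rratio sx2 se in Hfix *.
set I := Ifun cplx Rr eps in Hfix *.
set E := eps * sx2 * (1 - Rr * I) in Hfix.
have se2 : 0 < se ^+ 2 by rewrite exprn_gt0.
have hR : Rr = sx2 / (se ^+ 2 + sx2) by [].
have R0 : 0 < Rr by rewrite hR divr_gt0 // addr_gt0.
have R1 : Rr < 1 by rewrite hR ltr_pdivrMr ?addr_gt0 // mul1r ltrDr.
have hI := @Ifun_lb R cplx _ _ R0 R1 e0 e1; rewrite -/I in hI.
have E0 : 0 < E.
  have : 0 < se ^+ 4 by rewrite exprn_gt0.
  rewrite Hfix => h. rewrite -(pmulr_rgt0 _ (_ : 0 < 4 * s02)) //. nra.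
have Ese : E < se ^+ 2.
  set c := (1 - eps) / eps.
  have c0 : 0 <= c by apply: divr_ge0; lra.
  have ce : eps * (1 + c) = 1 by rewrite /c mulrDr mulr1 mulrCA divff ?gt_eqF // mulr1; lra.
  have hRs : Rr * (se ^+ 2 + sx2) = sx2 by rewrite hR divfK // gt_eqF // addr_gt0.
  have cR : 0 <= c * (1 - Rr) by rewrite mulr_ge0 // subr_ge0 ltW.
  have l0 : 0 < 1 + c * (1 - Rr) by lra.
  have hI' : 1 <= I * (1 + c * (1 - Rr)) by rewrite -ler_pdivrMr // mul1r.
  (* E = eps sx2 (1 - R I) ; eps sx2 (1+c(1-R)) (1 - R I) <= eps sx2 (1 + c(1-R) - R) = sx2 (1-R) *)
  have h1 : E * (1 + c * (1 - Rr)) <= sx2 * (1 - Rr).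
    rewrite /E. have : eps * sx2 * (1 - Rr * I) * (1 + c * (1 - Rr)) = eps * sx2 * ((1 + c * (1 - Rr)) - Rr * (I * (1 + c * (1 - Rr)))) by ring.
    move=> ->. have : sx2 * (1 - Rr) = eps * sx2 * ((1 + c * (1 - Rr)) - Rr) by rewrite -[in LHS](mul1r sx2) -ce; ring.
    move=> ->. rewrite ler_pM2l ?mulr_gt0 //. nra.
  have h2 : sx2 * (1 - Rr) < se ^+ 2 by nra.
  have H3 : E <= E * (1 + c * (1 - Rr)).
    have -> : E * (1 + c * (1 - Rr)) = E + E * (c * (1 - Rr)) by ring.
    have : 0 <= E * (c * (1 - Rr)) by apply: mulr_ge0 => //; exact: ltW.
    lra.
  lra.
have e4 : se ^+ 4 = se ^+ 2 * se ^+ 2 by rewrite -exprD.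
split.
  rewrite /d ltr_pdivrMr ?mulr_gt0 //. nra.
move=> hx.
have hE : E < s02.
  set q := eps * (1 - Rr * I) in hx.
  have q0 : 0 < q.
    rewrite ltNge; apply/negP => hq.
    have : s02 / q <= 0 by apply: mulr_ge0_le0; [exact: ltW | rewrite invr_le0].
    lra.
  have -> : E = sx2 * q by rewrite /E /q; ring.
  by rewrite -ltr_pdivlMr.
rewrite /d ltr_pdivrMr ?mulr_gt0 //. nra.
Qed.
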